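(* Let $n\geq 3$ be an integer and put $m=2^{n-1}$. Let $G_2(n)=\{0,1,\dots,2^n-1\}$ with the binary operation $\oplus$, and let $\mathrm{gyr}\colon G_2(n)\times G_2(n)\to \mathrm{Aut}(G_2(n),\oplus)$ be the map, all as defined in the context below. Then $(G_2(n),\oplus)$ is a gyrogroup with gyroautomorphisms given by $\mathrm{gyr}$; that is, $0\oplus x=x$ for all $x$, every element has a left inverse with respect to $0$, $a\oplus(b\oplus c)=(a\oplus b)\oplus \mathrm{gyr}[a,b](c)$ for all $a,b,c\in G_2(n)$, and $\mathrm{gyr}[a,b]=\mathrm{gyr}[a\oplus b,b]$ for all $a,b\in G_2(n)$.
   Context: A groupoid $(G,\oplus)$ is a gyrogroup if: (G1) there is $0\in G$ with $0\oplus x=x$ for all $x$; (G2) for each $a\in G$ there is $b\in G$ with $b\oplus a=0$; (G3) there is a function $\mathrm{gyr}\colon G\times G\to\mathrm{Aut}(G,\oplus)$ (automorphisms = bijections preserving $\oplus$) such that $a\oplus(b\oplus c)=(a\oplus b)\oplus\mathrm{gyr}[a,b](c)$ for all $a,b,c$; (G4) $\mathrm{gyr}[a,b]=\mathrm{gyr}[a\oplus b,b]$ for all $a,b$. Setup: $n\ge 3$, $m=2^{n-1}$, $G_2(n)=\{0,1,\dots,2^n-1\}$, $P(n)=\{0,\dots,m-1\}$, $H(n)=\{m,\dots,2^n-1\}$; $O_P,E_P$ are the odd/even elements of $P(n)$, $O_H,E_H$ the odd/even elements of $H(n)$. For $i,j\in G_2(n)$ let $t,s\in P(n)$ with $t\equiv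 i+j\pmod m$, $s\equiv i+j+\frac m2\pmod m$, and set $i\oplus j=t$ if $(i,j)\in (P(n)\times P(n))\cup\big[(H(n)\times H(n))\setminus(E_H\times O_H)\big]$; $i\oplus j=t+m$ if $(i,j)\in (P(n)\times H(n))\cup\big[(H(n)\times P(n))\setminus(E_H\times O_P)\big]$; $i\oplus j=s$ if $(i,j)\in E_H\times O_H$; $i\oplus j=s+m$ if $(i,j)\in E_H\times O_P$. Let $A\colon G_2(n)\to G_2(n)$ be $A(i)=r$ if $i\in O_P$, $A(i)=r+m$ if $i\in O_H$, $A(i)=i$ otherwise, where $r\in P(n)$, $r\equiv i+\frac m2\pmod m$ ($A$ is an automorphism of $(G_2(n),\oplus)$). Let $M=[O_P\times(O_H\cup E_H)]\cup[O_H\times(O_P\cup E_H)]\cup[E_H\times(O_P\cup O_H)]$, and define $\mathrm{gyr}[a,b]=A$ if $(a,b)\in M$ and $\mathrm{gyr}[a,b]=I$ (the identity map) otherwise. *)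

(* Defs.v *)
From mathcomp Require Import all_boot.
Set Implicit Arguments. Unset Strict Implicit. Unset Printing Implicit Defensive.

Section G2.
Variable n : nat.

Definition mm : nat := 2 ^ n.-1.
Definition inG (i : nat) : bool := i < 2 ^ n.
Definition inP (i : nat) : bool := i < mm.
Definition inH (i : nat) : bool := (mm <= i) && (i < 2 ^ n).
Definition inOP (i : nat) : bool := inP i && odd i.
Definition inEP (i : nat) : bool := inP i && ~~ odd i.
Definition inOH (i : nat) : bool := inH i && odd i.
Definition inEH (i : nat) : bool := inH i && ~~ odd i.

Definition tt (i j : nat) : nat := (i + j) %% mm.
Definition ss (i j : nat) : nat := (i + j + mm %/ 2) %% mm.

Definition oplus (i j : nat) : nat :=
  if inEH i && inOH j then ss i j
  else if inEH i && inOP j then ss i j + mm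
  else if (inP i && inP j) || (inH i && inH j) then tt i j
  else tt i j + mm.

Definition Amap (i : nat) : nat :=
  if inOP i then (i + mm %/ 2) %% mm
  else if inOH i then (i + mm %/ 2) %% mm + mm
  else i.

Definition inM (a b : nat) : bool :=
  [|| inOP a && (inOH b || inEH b),
      inOH a && (inOP b || inEH b)
    | inEH a && (inOP b || inOH b)].

Definition gyr (a b : nat) : nat -> nat := if inM a b then Amap else id.

Definition is_aut (f : nat -> nat) : Prop :=
  [/\ (forall x, inG x -> inG (f x)),
      (forall x y, inG x -> inG y -> f x = f y -> x = y),
      (forall y, inG y -> exists2 x, inG x & f x = y)
    & (forall x y, inG x -> inG y -> f (oplus x y) = oplus (f x) (f y))].

End G2.

(* Main.v *)
From mathcomp Require Import all_boot zify.
Require Import Defs.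
Set Implicit Arguments. Unset Strict Implicit. Unset Printing Implicit Defensive.

Section S.
Variable n : nat.
Hypothesis hn : 3 <= n.
Local Notation m := (mm n).
Local Notation k := (mm n %/ 2).

Lemma mE : 2 ^ n = m * 2.
Proof. rewrite /mm; case: n hn => // p _; by rewrite expnS mulnC. Qed.

Lemma kE : m = k * 2 /\ ~~ odd k /\ 0 < k.
Proof.
rewrite /mm; case: n hn => [|[|[|p]]] // _ /=.
rewrite [2 ^ _.+2]expnS mulKn //; split; first by rewrite mulnC.
by rewrite oddX /= expn_gt0.
Qed.

Lemma m_even : ~~ odd m.
Proof. by case: kE => -> _; rewrite oddM andbF. Qed.

Lemma charx x : x < 2 ^ n -> x = (m <= x) * m + x %% m.
Proof.
rewrite mE => lx; case: leqP => h /=.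
  by rewrite mul1n -{2}(subnK h) modnDr modn_small ?subnK //; lia.
by rewrite mul0n add0n modn_small.
Qed.

Lemma Hf (h : bool) X : (m <= h * m + X %% m) = h.
Proof.
have mp : 0 < m by case: kE => -> [_ ?]; lia.
have := ltn_pmod X mp; case: h => /=; lia.
Qed.

Lemma oddf (h : bool) X : odd (h * m + X %% m) = odd X.
Proof.
rewrite oddD oddM (negbTE m_even) andbF /=.
by rewrite odd_mod //; apply/negbTE/m_even.
Qed.

Lemma ltf (h : bool) X : h * m + X %% m < 2 ^ n.
Proof.
have mp : 0 < m by case: kE => -> [_ ?]; lia.
have := ltn_pmod X mp; rewrite mE; case: h => /=; lia.
Qed.


Lemma oplus_rep x y : x < 2 ^ n -> y < 2 ^ n ->
  oplus n x y = ((m <= x) (+) (m <= y)) * m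
     + (x + y + [&& m <= x, ~~ odd x & odd y] * k) %% m.
Proof.
move=> lx ly; rewrite /oplus /inEH /inOH /inOP /inH /inP /tt /ss lx ly.
rewrite !ltnNge.
case: (m <= x); case: (m <= y); case: (odd x); case: (odd y);
  rewrite /= ?mul1n ?mul0n ?addn0 ?add0n // addnC.
all: by [].
Qed.

Definition Mf (ha pa hb pb : bool) :=
  [|| (~~ha && pa) && ((hb && pb) || (hb && ~~pb)),
      (ha && pa) && ((~~hb && pb) || (hb && ~~pb))
    | (ha && ~~pa) && ((~~hb && pb) || (hb && pb))].

Lemma inM_rep x y : x < 2 ^ n -> y < 2 ^ n ->
  inM n x y = Mf (m <= x) (odd x) (m <= y) (odd y).
Proof.
move=> lx ly; rewrite /inM /inEH /inOH /inOP /inH /inP lx ly !ltnNge.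
by case: (m <= x); case: (m <= y); case: (odd x); case: (odd y).
Qed.

Lemma Amap_rep x : x < 2 ^ n -> Amap n x = (m <= x) * m + (x + odd x * k) %% m.
Proof.
move=> lx; rewrite /Amap /inOH /inOP /inH /inP lx !ltnNge.
case hx: (m <= x); case: (odd x); rewrite /= ?mul1n ?mul0n ?addn0 ?add0n ?modn_mod //.
all: try by rewrite addnC.
all: by rewrite {1}(charx lx) hx ?mul1n ?mul0n.
Qed.

Lemma gyr_rep a b c : c < 2 ^ n ->
  gyr n a b c = (m <= c) * m + (c + (inM n a b && odd c) * k) %% m.
Proof.
move=> lc; rewrite /gyr; case: (inM n a b); first by rewrite Amap_rep.
by rewrite /= mul0n addn0 -charx.
Qed.


Lemma oddk : odd k = false.
Proof. by case: kE => _ [/negbTE]. Qed.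

Lemma modm_congr A B X Z : A %% m = B %% m -> (X + A + Z) %% m = (X + B + Z) %% m.
Proof.
move=> e; rewrite (addnC X) -!addnA -modnDml e modnDml.
by rewrite !addnA (addnC B).
Qed.

Lemma inner_l X (h : bool) Y Z : (X + (h * m + Y %% m) + Z) %% m = (X + Y + Z) %% m.
Proof. by apply: modm_congr; rewrite modnMDl modn_mod. Qed.

Lemma inner_r (h : bool) Y X Z : ((h * m + Y %% m) + X + Z) %% m = (Y + X + Z) %% m.
Proof.
rewrite -(add0n (_ + X)) -(add0n (Y + X)) !(addnA 0).
have := modm_congr 0 (X + Z) (_ : (h * m + Y %% m) %% m = Y %% m).
rewrite -!addnA => ->; last by rewrite modnMDl modn_mod.
by [].
Qed.

Lemma modsh X Y : X = Y \/ X = Y + m \/ Y = X + m -> X %% m = Y %% m.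
Proof. by case=> [->|[->|->]]; rewrite ?modnDr. Qed.

Lemma oplus_lt x y : x < 2 ^ n -> y < 2 ^ n -> oplus n x y < 2 ^ n.
Proof. by move=> lx ly; rewrite oplus_rep // ltf. Qed.

Lemma Amap_lt x : x < 2 ^ n -> Amap n x < 2 ^ n.
Proof. by move=> lx; rewrite Amap_rep // ltf. Qed.

Lemma gyr_lt a b x : x < 2 ^ n -> gyr n a b x < 2 ^ n.
Proof. by move=> lx; rewrite gyr_rep // ltf. Qed.

Lemma assoc a b c : a < 2 ^ n -> b < 2 ^ n -> c < 2 ^ n ->
  oplus n a (oplus n b c) = oplus n (oplus n a b) (gyr n a b c).
Proof.
move=> Ha Hb Hc.
rewrite (oplus_rep Ha (oplus_lt Hb Hc)) (oplus_rep (oplus_lt Ha Hb) (gyr_lt a b Hc)).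
rewrite (oplus_rep Hb Hc) (oplus_rep Ha Hb) (gyr_rep a b Hc) (inM_rep Ha Hb) !Hf !oddf.
rewrite inner_l inner_r inner_l !oddD !oddM oddk !andbF !addbF.
have [mk _] := kE.
case: (m <= a); case: (m <= b); case: (m <= c); case: (odd a); case: (odd b); case: (odd c);
  rewrite /=; congr (_ + _); rewrite ?mul1n ?mul0n ?addn0; apply: modsh; lia.
Qed.


Lemma inner_0 (h : bool) Y Z : (h * m + Y %% m + Z) %% m = (Y + Z) %% m.
Proof. by rewrite -modnDml modnMDl modn_mod modnDml. Qed.

Lemma oddR x y : odd (x + y + [&& m <= x, ~~ odd x & odd y] * k) = odd x (+) odd y.
Proof. by rewrite !oddD oddM oddk andbF addbF. Qed.

Lemma gyr_G4 a b : a < 2 ^ n -> b < 2 ^ n -> gyr n a b = gyr n (oplus n a b) b.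
Proof.
move=> Ha Hb; rewrite /gyr (inM_rep (oplus_lt Ha Hb) Hb) (oplus_rep Ha Hb) Hf oddf.
rewrite oddR (inM_rep Ha Hb).
by case: (m <= a); case: (m <= b); case: (odd a); case: (odd b).
Qed.

Lemma ident x : x < 2 ^ n -> oplus n 0 x = x.
Proof.
move=> lx; rewrite oplus_rep ?expn_gt0 //.
have [mk [_ kp]] := kE.
have -> : (m <= 0) = false by rewrite leqn0; apply/eqP; lia.
by rewrite /= add0n mul0n addn0 -charx.
Qed.

Lemma inverse a : a < 2 ^ n -> exists2 b, b < 2 ^ n & oplus n b a = 0.
Proof.
move=> Ha.
have mp : 0 < m by case: kE => -> [_ ?]; lia.
have le : a %% m <= m by apply: ltnW; apply: ltn_pmod.
exists ((m <= a) * m + (m - a %% m) %% m); first exact: ltf.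
rewrite oplus_rep ?ltf // Hf oddf oddB // odd_mod; last exact/negbTE/m_even.
rewrite (negbTE m_even) /= addbb.
have -> : [&& m <= a, ~~ odd a & odd a] = false by case: (odd a); rewrite ?andbF.
rewrite mul0n add0n inner_r addn0.
rewrite -(addn0 (_ + a)) (@modm_congr a (a %% m)) ?modn_mod //.
by rewrite addn0 subnK // modnn.
Qed.

Lemma Amap_inv x : x < 2 ^ n -> Amap n (Amap n x) = x.
Proof.
move=> lx; have [mk _] := kE.
rewrite (Amap_rep (Amap_lt lx)) Amap_rep // Hf oddf oddD oddM oddk andbF addbF inner_0.
rewrite [RHS](charx lx); congr (_ + _).
case: (odd x); rewrite ?mul1n ?mul0n ?addn0 //; apply: modsh; lia.
Qed.

Lemma Amap_hom x y : x < 2 ^ n -> y < 2 ^ n ->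
  Amap n (oplus n x y) = oplus n (Amap n x) (Amap n y).
Proof.
move=> lx ly; have [mk _] := kE.
rewrite (Amap_rep (oplus_lt lx ly)) (oplus_rep (Amap_lt lx) (Amap_lt ly)).
rewrite (oplus_rep lx ly) (Amap_rep lx) (Amap_rep ly) !Hf !oddf oddR !oddD !oddM oddk !andbF !addbF.
rewrite inner_0 inner_r inner_l.
case: (m <= x); case: (m <= y); case: (odd x); case: (odd y);
  rewrite /=; congr (_ + _); rewrite ?mul1n ?mul0n ?addn0; apply: modsh; lia.
Qed.

Lemma gyr_aut a b : is_aut n (gyr n a b).
Proof.
rewrite /gyr; case: (inM n a b); split => //.
- exact: Amap_lt.
- by move=> x y lx ly e; rewrite -(Amap_inv lx) e Amap_inv.
- by move=> y ly; exists (Amap n y); [exact: Amap_lt | exact: Amap_inv].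
- exact: Amap_hom.
- by move=> y ly; exists y.
Qed.

End S.

Theorem mainTheorem2 (n : nat) (hn : 3 <= n) :
  inG n 0 /\
  (forall x y, inG n x -> inG n y -> inG n (oplus n x y)) /\
  (forall x, inG n x -> oplus n 0 x = x) /\
  (forall a, inG n a -> exists2 b, inG n b & oplus n b a = 0) /\
  (forall a b, inG n a -> inG n b -> is_aut n (gyr n a b)) /\
  (forall a b c, inG n a -> inG n b -> inG n c ->
     oplus n a (oplus n b c) = oplus n (oplus n a b) (gyr n a b c)) /\
  (forall a b, inG n a -> inG n b ->
     gyr n a b = gyr n (oplus n a b) b).
Proof.
rewrite /inG; split; first by rewrite expn_gt0.
split; first exact: oplus_lt.
split; first exact: ident.
split; first exact: inverse.
split; first by move=> a b _ _; apply: gyr_aut.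
split; first exact: assoc.
exact: gyr_G4.
Qed.
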